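(* For each $\tau>0$ let $t_\tau\in\mathbb R$ be arbitrary and set $\xi_\tau(s)=\big(\phi_\tau^2+\tau^2/\phi_\tau^2\big)(s-t_\tau)$. Then for every sequence $\tau_n\to0$ there is a subsequence along which $\xi_{\tau_n}$ converges uniformly on compact subsets of $\mathbb R$ either to the function $s\mapsto(\cosh(s-s_0))^{-2}$ for some $s_0\in\mathbb R$, or to $0$.
   Context: $\phi_\tau$ is the unique smooth, periodic, non-constant solution of $\dot\phi^2+(\phi^2-\tau)^2=\phi^2$ taking its minimum value at $s=0$. *)

(* Defs.v *)
From Stdlib Require Import Reals Lra.
Open Scope R_scope.

Definition smooth_with (f : R -> R) (D : nat -> R -> R) : Prop :=
  D 0%nat = f /\ forall (n : nat) (x : R), derivable_pt_lim (D n) x (D (S n) x).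

(* phi is a smooth, periodic, non-constant solution of
   phi'^2 + (phi^2 - tau)^2 = phi^2 taking its minimum value at s = 0.
   (The paper asserts this object is unique; we quantify over any such phi.) *)
Definition is_phi (tau : R) (phi : R -> R) : Prop :=
  exists D : nat -> R -> R,
    smooth_with phi D /\
    (forall s, (D 1%nat s)^2 + (phi s ^ 2 - tau)^2 = phi s ^ 2) /\
    (exists T, 0 < T /\ forall s, phi (s + T) = phi s) /\
    (exists a b, phi a <> phi b) /\
    (forall s, phi 0 <= phi s).

Definition xi (tau t : R) (phi : R -> R) (s : R) : R :=
  phi (s - t) ^ 2 + tau ^ 2 / phi (s - t) ^ 2.

Definition cv_unif_compact (g : nat -> R -> R) (h : R -> R) : Prop :=
  forall a b eps : R, 0 < eps ->
    exists N : nat, forall k : nat, (N <= k)%nat ->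
      forall s, a <= s <= b -> Rabs (g k s - h s) < eps.

(* Main.v *)
Require Import Defs.
From Stdlib Require Import Reals Lra Psatz Rtopology Classical ClassicalEpsilon FunctionalExtensionality.
Open Scope R_scope.

Notation dl := derivable_pt_lim.

Lemma D_eq f x l l' : l = l' -> dl f x l -> dl f x l'.
Proof. intros ->; auto. Qed.
Lemma D_plus f g x a b : dl f x a -> dl g x b -> dl (fun y => f y + g y) x (a+b).
Proof. intros; apply (derivable_pt_lim_plus f g); auto. Qed.
Lemma D_minus f g x a b : dl f x a -> dl g x b -> dl (fun y => f y - g y) x (a-b).
Proof. intros; apply (derivable_pt_lim_minus f g); auto. Qed.
Lemma D_mult f g x a b : dl f x a -> dl g x b -> dl (fun y => f y * g y) x (a * g x + f x * b).
Proof. intros; apply (derivable_pt_lim_mult f g); auto. Qed.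
Lemma D_const c x : dl (fun _ => c) x 0.
Proof. apply (derivable_pt_lim_const c). Qed.
Lemma D_id x : dl (fun y => y) x 1.
Proof. apply derivable_pt_lim_id. Qed.
Lemma D_comp f g x a b : dl f x a -> dl g (f x) b -> dl (fun y => g (f y)) x (b * a).
Proof. intros; apply (derivable_pt_lim_comp f g); auto. Qed.
Lemma D_pow f x a n : dl f x a -> dl (fun y => f y ^ n) x (INR n * f x ^ pred n * a).
Proof. intros; apply (D_comp f (fun y => y ^ n)); auto. apply derivable_pt_lim_pow. Qed.
Lemma D_inv f x a : f x <> 0 -> dl f x a -> dl (fun y => / f y) x (- a / (f x)^2).
Proof.
  intros Hn Hd.
  assert (pr : derivable_pt f x) by (exists a; exact Hd).
  assert (H := derive_pt_inv f x pr Hn).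
  apply (derive_pt_eq _ _ _ (derivable_pt_inv f x Hn pr)).
  rewrite H. replace (derive_pt f x pr) with a. unfold Rsqr; simpl; unfold Rdiv; field; auto.
  symmetry; apply derive_pt_eq; auto.
Qed.
Lemma D_div f g x a b : g x <> 0 -> dl f x a -> dl g x b ->
  dl (fun y => f y / g y) x ((a * g x - f x * b) / (g x)^2).
Proof.
  intros Hn Hf Hg. unfold Rdiv.
  eapply D_eq; [|apply D_mult; [exact Hf| apply D_inv; eauto]]. idtac.
  cbv beta. field; auto.
Qed.
Lemma dl_cont f f' x : dl f x f' -> continuity_pt f x.
Proof. intros H; apply derivable_continuous_pt; exists f'; exact H. Qed.

Lemma cosh_sinh2 x : cosh x ^ 2 - sinh x ^ 2 = 1.
Proof.
  unfold cosh, sinh. assert (H: exp x * exp (-x) = 1).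
  { rewrite <- exp_plus. replace (x + - x) with 0 by ring. apply exp_0. }
  nra.
Qed.
Lemma cosh_ge1 x : 1 <= cosh x.
Proof.
  unfold cosh. assert (H: exp x * exp (-x) = 1).
  { rewrite <- exp_plus. replace (x + - x) with 0 by ring. apply exp_0. }
  assert (0 < exp x) by apply exp_pos. assert (0 < exp (-x)) by apply exp_pos. set (a := exp x) in *; set (b := exp (-x)) in *. assert (0 <= (a-b)^2) by apply pow2_ge_0. assert ((a+b)^2 >= 4) by nra. assert (a + b >= 2) by nra. lra.
Qed.
Lemma sinh_le_cosh x : Rabs (sinh x) <= cosh x.
Proof.
  unfold cosh, sinh. assert (0 < exp x) by apply exp_pos. assert (0 < exp (-x)) by apply exp_pos.
  apply Rabs_le; lra.
Qed.

Definition eta (s : R) := / cosh s ^ 2.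
Definition eta1 (s : R) := -2 * sinh s / cosh s ^ 3.
Definition H0 (x : R) := 4 * x - 6 * x^2.

Lemma eta_d s : dl eta s (eta1 s).
Proof.
  unfold eta, eta1. assert (1 <= cosh s) by apply cosh_ge1.
  eapply D_eq; [|apply D_inv; [|apply D_pow; apply derivable_pt_lim_cosh]].
  - simpl; field; lra.
  - apply pow_nonzero; lra.
Qed.
Lemma eta1_d s : dl eta1 s (H0 (eta s)).
Proof.
  unfold eta, eta1, H0. assert (1 <= cosh s) by apply cosh_ge1.
  assert (Hc := cosh_sinh2 s).
  eapply D_eq; [|apply D_div; [|apply D_mult; [apply D_const|apply derivable_pt_lim_sinh]| apply D_pow; apply derivable_pt_lim_cosh]].
  - simpl. field_simplify_eq; [|lra]. replace (sinh s ^ 2) with (cosh s ^ 2 - 1) by lra. ring.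
  - apply pow_nonzero; lra.
Qed.
Lemma eta_bounds s : 0 < eta s <= 1.
Proof.
  unfold eta. assert (1 <= cosh s) by apply cosh_ge1.
  assert (1 <= cosh s ^ 2) by nra. split. apply Rinv_0_lt_compat; lra.
  rewrite <- Rinv_1. apply Rinv_le_contravar; lra.
Qed.
Lemma eta1_bound s : Rabs (eta1 s) <= 2.
Proof.
  unfold eta1. assert (1 <= cosh s) by apply cosh_ge1. assert (Hs := sinh_le_cosh s).
  unfold Rdiv. rewrite !Rabs_mult. rewrite Rabs_inv by (apply pow_nonzero; lra).
  rewrite Rabs_pos_eq with (x := cosh s ^ 3) by (apply pow_le; lra).
  replace (Rabs (-2)) with 2 by (rewrite Rabs_left; lra).
  assert (1 <= cosh s ^ 3) by (simpl; nra).
  apply Rmult_le_reg_r with (cosh s ^ 3). lra.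
  rewrite Rmult_assoc, Rinv_l by lra. nra.
Qed.
Lemma eta_lip x y : Rabs (eta x - eta y) <= 2 * Rabs (x - y).
Proof.
  destruct (Req_dec x y) as [->|Hne].
  - unfold Rminus; rewrite !Rplus_opp_r, Rabs_R0; lra.
  - destruct (Rlt_or_le y x) as [Hl|Hl].
    + destruct (MVT_cor2 eta eta1 y x Hl (fun c _ => eta_d c)) as [c [Hc _]].
      rewrite Hc, Rabs_mult. apply Rmult_le_compat_r. apply Rabs_pos. apply eta1_bound.
    + assert (Hl' : x < y) by lra.
      destruct (MVT_cor2 eta eta1 x y Hl' (fun c _ => eta_d c)) as [c [Hc _]].
      rewrite <- Rabs_Ropp, Ropp_minus_distr, Hc, Rabs_mult, <- (Rabs_Ropp (x - y)), Ropp_minus_distr.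
      apply Rmult_le_compat_r. apply Rabs_pos. apply eta1_bound.
Qed.
Lemma eta_even s : eta (-s) = eta s.
Proof. unfold eta, cosh. rewrite Ropp_involutive, (Rplus_comm (exp (-s))). reflexivity. Qed.
Definition Hf (tau x : R) := -6 * x^2 + (4 + 8*tau) * x + 8 * tau^2.
Definition good (tau : R) (g g1 : R -> R) : Prop :=
  (forall s, dl g s (g1 s)) /\ (forall s, dl g1 s (Hf tau (g s))) /\
  (forall s, 2*tau <= g s <= 1 + 2*tau) /\
  (forall s, g1 s ^ 2 = 4 * (1 + 2*tau - g s) * (g s ^ 2 - 4 * tau^2)).

Lemma D_shift f c x a : dl f (x + c) a -> dl (fun y => f (y + c)) x a.
Proof.
  intros H. eapply D_eq; [|apply (D_comp (fun y => y + c) f)].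
  2: { eapply D_eq; [|apply D_plus; [apply D_id|apply D_const]]. reflexivity. }
  2: exact H. ring.
Qed.
Lemma D_opp f x a : dl f x a -> dl (fun y => - f y) x (- a).
Proof. intros; apply (derivable_pt_lim_opp f); auto. Qed.
Lemma D_refl f x a : dl f (- x) a -> dl (fun y => f (- y)) x (- a).
Proof.
  intros H. eapply D_eq; [|apply (D_comp (fun y => - y) f)].
  2: apply D_opp, D_id.
  2: exact H. ring.
Qed.

Lemma good_shift tau g g1 c : good tau g g1 -> good tau (fun s => g (s + c)) (fun s => g1 (s + c)).
Proof.
  intros [H1 [H2 [H3 H4]]]; repeat split; intros.
  - apply D_shift; auto.
  - apply D_shift; auto.
  - apply H3.
  - apply H3.
  - apply H4.
Qed.
Lemma good_refl tau g g1 : good tau g g1 -> good tau (fun s => g (- s)) (fun s => - g1 (- s)).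
Proof.
  intros [H1 [H2 [H3 H4]]]; repeat split; intros.
  - apply D_refl; auto.
  - eapply D_eq; [|apply D_opp; apply D_refl; apply H2]. ring.
  - apply H3.
  - apply H3.
  - rewrite <- H4. ring.
Qed.
Lemma good_max tau g g1 m : 0 < tau -> good tau g g1 -> g m = 1 + 2*tau -> g1 m = 0.
Proof.
  intros Ht [H1 [H2 [H3 H4]]] Hm. specialize (H4 m). rewrite Hm in H4.
  replace (4 * (1 + 2 * tau - (1 + 2 * tau)) * ((1 + 2 * tau) ^ 2 - 4 * tau ^ 2)) with 0 in H4 by ring.
  destruct (Req_dec (g1 m) 0) as [h|h]; auto. exfalso; apply (pow_nonzero _ 2 h); lra.
Qed.

Lemma abs_from_sq x K : 0 <= K -> x^2 <= K^2 -> Rabs x <= K.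
Proof.
  intros HK Hx. destruct (Rle_or_lt (Rabs x) K) as [h|h]; auto.
  exfalso. assert (Rabs x ^ 2 = x ^ 2) by (rewrite RPow_abs; apply Rabs_pos_eq, pow2_ge_0).
  assert (K * K < Rabs x * Rabs x) by (apply Rmult_le_0_lt_compat; lra).
  simpl in *. lra.
Qed.

Lemma gronwall_pos tau g g1 s : 0 < tau <= 1/2 -> good tau g g1 -> g 0 = 1 + 2*tau -> 0 <= s ->
  Rabs (g s - eta s) <= 5 * tau * exp (12 * s).
Proof.
  intros Ht Hg Hm Hs.
  assert (Hg10 : g1 0 = 0) by (eapply good_max; eauto; lra).
  destruct Hg as [H1 [H2 [H3 H4]]].
  set (c := 50 * tau^2 / 3).
  set (E := fun x => (g x - eta x)^2 + (g1 x - eta1 x)^2).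
  set (E1 := fun x => 2 * (g x - eta x) * (g1 x - eta1 x) + 2 * (g1 x - eta1 x) * (Hf tau (g x) - H0 (eta x))).
  assert (HE : forall x, dl E x (E1 x)).
  { intros x. unfold E, E1.
    eapply D_eq; [|apply D_plus; apply D_pow; apply D_minus; (apply H1 || apply H2 || apply eta_d || apply eta1_d)].
    simpl. ring. }
  assert (HE1 : forall x, E1 x <= 24 * E x + 400 * tau^2).
  { intros x. unfold E, E1. specialize (H3 x). assert (He := eta_bounds x).
    set (e := g x - eta x). set (f := g1 x - eta1 x).
    assert (Hk : Hf tau (g x) - H0 (eta x) = e * (4 - 6 * (g x + eta x)) + 8 * tau * (g x + tau)).
    { unfold Hf, H0, e. ring. }
    rewrite Hk. set (k := 5 - 6 * (g x + eta x)).
    assert (0 <= (13 - k) * (e + f)^2) by (apply Rmult_le_pos; [unfold k; lra | apply pow2_ge_0]).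
    assert (0 <= (13 + k) * (e - f)^2) by (apply Rmult_le_pos; [unfold k; lra | apply pow2_ge_0]).
    assert (0 <= (f - 8 * tau * (g x + tau))^2) by apply pow2_ge_0.
    assert ((g x + tau)^2 <= 25/4) by nra.
    assert (tau^2 * (g x + tau)^2 <= tau^2 * (25/4)) by (apply Rmult_le_compat_l; [apply pow2_ge_0|lra]).
    replace (2 * e * f + 2 * f * (e * (4 - 6 * (g x + eta x)) + 8 * tau * (g x + tau)))
      with (2 * e * f * k + 16 * tau * f * (g x + tau)) by (unfold k; ring).
    nra. }
  set (F := fun x => (E x + c) * exp (-24 * x)).
  set (F1 := fun x => E1 x * exp (-24 * x) + (E x + c) * (-24 * exp (-24 * x))).
  assert (HF : forall x, dl F x (F1 x)).
  { intros x. unfold F, F1.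
    eapply D_eq; [|apply D_mult; [apply D_plus; [apply HE|apply D_const] | apply (D_comp (fun y => -24 * y) exp)]].
    3: apply derivable_pt_lim_exp.
    2: { eapply D_eq; [|apply D_mult; [apply D_const| apply D_id]]. reflexivity. }
    cbv beta. ring. }
  assert (HFs : F s <= F 0).
  { destruct (Req_dec s 0) as [->|hs]; [lra|].
    destruct (MVT_cor2 F F1 0 s ltac:(lra) (fun x _ => HF x)) as [z [Hz _]].
    assert (F1 z <= 0).
    { unfold F1. assert (0 < exp (-24 * z)) by apply exp_pos. specialize (HE1 z). unfold c. nra. }
    nra. }
  assert (HE0 : E 0 = 4 * tau^2).
  { unfold E. rewrite Hm, Hg10. unfold eta, eta1. rewrite cosh_0, sinh_0. field. }
  assert (HEs : E s + c <= (4 * tau^2 + c) * exp (24 * s)).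
  { unfold F in HFs. rewrite HE0 in HFs. replace (-24 * 0) with 0 in HFs by ring. rewrite exp_0 in HFs.
    assert (Hee : exp (-24 * s) * exp (24 * s) = 1) by (rewrite <- exp_plus; replace (-24 * s + 24 * s) with 0 by ring; apply exp_0).
    assert (0 < exp (24 * s)) by apply exp_pos.
    assert (HH : (E s + c) * exp (-24 * s) * exp (24 * s) <= (4 * tau ^ 2 + c) * 1 * exp (24 * s)) by (apply Rmult_le_compat_r; lra).
    rewrite Rmult_assoc, Hee in HH. lra. }
  apply abs_from_sq.
  - assert (0 < exp (12 * s)) by apply exp_pos. nra.
  - assert (Hx : exp (24 * s) = exp (12 * s) ^ 2) by (simpl; rewrite Rmult_1_r, <- exp_plus; f_equal; ring).
    assert (0 <= (g1 s - eta1 s)^2) by apply pow2_ge_0.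
    assert (0 < exp (24 * s)) by apply exp_pos.
    unfold E, c in HEs. rewrite Hx in *.
    assert (0 <= tau^2) by apply pow2_ge_0.
    replace ((5 * tau * exp (12 * s)) ^ 2) with (25 * tau^2 * exp (12 * s) ^ 2) by ring.
    set (X := exp (12 * s) ^ 2) in *.
    assert (0 <= tau^2 * X) by (apply Rmult_le_pos; lra).
    lra.
Qed.

Lemma gronwall tau g g1 m s : 0 < tau <= 1/2 -> good tau g g1 -> g m = 1 + 2*tau ->
  Rabs (g (m + s) - eta s) <= 5 * tau * exp (12 * Rabs s).
Proof.
  intros Ht Hg Hm. destruct (Rle_or_lt 0 s) as [hs|hs].
  - rewrite (Rabs_pos_eq s) by lra.
    pose proof (gronwall_pos tau _ _ s Ht (good_shift tau g g1 m Hg)) as G.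
    cbv beta in G. rewrite Rplus_0_l in G. rewrite Rplus_comm. apply G; auto.
  - rewrite (Rabs_left s) by lra.
    pose proof (gronwall_pos tau _ _ (-s) Ht (good_refl tau _ _ (good_shift tau g g1 m Hg))) as G.
    cbv beta in G. replace (- 0 + m) with m in G by ring. replace (- - s + m) with (m + s) in G by ring.
    rewrite eta_even in G. apply G; auto. lra.
Qed.

Lemma cont_eps f x : continuity_pt f x -> forall eps, 0 < eps ->
  exists d, 0 < d /\ forall y, Rabs (y - x) < d -> Rabs (f y - f x) < eps.
Proof.
  intros Hc eps He. destruct (Hc eps He) as [d [Hd Hy]]. exists d; split; auto.
  intros y Hyd. destruct (Req_dec y x) as [->|hne].
  - unfold Rminus; rewrite Rplus_opp_r, Rabs_R0; auto.
  - apply (Hy y). split. split; [exact I| auto]. exact Hyd.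
Qed.

Lemma cont_ind (f : R -> R) a b : a <= b -> (forall x, a <= x <= b -> continuity_pt f x) -> 0 < f a ->
  (forall x, a <= x <= b -> (forall y, a <= y < x -> 0 < f y) -> f x <> 0) ->
  forall x, a <= x <= b -> 0 < f x.
Proof.
  intros Hab Hc Ha Hstep x0 Hx0. apply Rnot_le_lt; intro Hbad.
  set (E := fun y => a <= y <= x0 /\ forall z, a <= z <= y -> 0 < f z).
  assert (Eb : bound E) by (exists x0; intros y [Hy _]; lra).
  assert (Ea : exists y, E y) by (exists a; split; [lra| intros z Hz; replace z with a by lra; auto]).
  destruct (completeness E Eb Ea) as [r [Hub Hlub]].
  assert (Har : a <= r) by (apply Hub; destruct Ea as [y Hy]; unfold E; split; [lra|intros z Hz; replace z with a by lra; auto]).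
  assert (Hrx : r <= x0) by (apply Hlub; intros y [Hy _]; lra).
  assert (Hbelow : forall y, a <= y < r -> 0 < f y).
  { intros y Hy. destruct (classic (exists w, E w /\ y <= w)) as [[w [[_ Hw] Hyw]]|Hn].
    - apply Hw; lra.
    - exfalso. assert (r <= y); [|lra]. apply Hlub. intros w Hw.
      destruct (Rle_or_lt w y); auto. exfalso; apply Hn; exists w; split; auto; lra. }
  assert (Hfr : f r <> 0) by (apply Hstep; auto; lra).
  assert (Hfr' : 0 < f r).
  { apply Rnot_le_lt; intro Hle. assert (Hlt : f r < 0) by lra.
    destruct (cont_eps f r (Hc r ltac:(lra)) (- f r) ltac:(lra)) as [d [Hd Hy]].
    destruct (Req_dec r a) as [->|hra]; [lra|].
    set (y := Rmax a (r - d/2)).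
    assert (Hya : a <= y < r) by (unfold y; split; [apply Rmax_l| apply Rmax_lub_lt; lra]).
    assert (Hyr : Rabs (y - r) < d) by (unfold y, Rmax; destruct Rle_dec; apply Rabs_def1; lra).
    specialize (Hy y Hyr). specialize (Hbelow y Hya). apply Rabs_def2 in Hy. lra. }
  assert (Hrx' : r < x0) by (destruct (Req_dec r x0); [subst; lra| lra]).
  destruct (cont_eps f r (Hc r ltac:(lra)) (f r) Hfr') as [d [Hd Hy]].
  set (y := Rmin x0 (r + d/2)).
  assert (Ey : E y).
  { unfold y; split. split; [apply Rmin_glb; lra| apply Rmin_l].
    intros z Hz. destruct (Rlt_or_le z r) as [hz|hz]; [apply Hbelow; lra|].
    assert (z <= r + d/2) by (apply Rle_trans with (Rmin x0 (r + d/2)); [lra|apply Rmin_r]).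
    assert (Hzr : Rabs (z - r) < d) by (apply Rabs_def1; lra).
    specialize (Hy z Hzr). apply Rabs_def2 in Hy. lra. }
  specialize (Hub y Ey). unfold y in Hub. unfold Rmin in Hub; destruct Rle_dec in Hub; lra.
Qed.

Lemma Hf_top tau x : 0 < tau <= 1/320 -> 3/4 <= x <= 1 + 2*tau -> Hf tau x <= -1/4.
Proof.
  intros Ht Hx. unfold Hf.
  assert (0 <= (x - 3/4) * (x + 1/12)) by (apply Rmult_le_pos; lra).
  assert (0 <= tau * (1 + 2*tau - x)) by (apply Rmult_le_pos; lra).
  assert (0 <= tau * tau) by nra.
  nra.
Qed.

Lemma climb tau g g1 d s : 0 < d <= 1/2 -> 0 < tau <= d/160 -> good tau g g1 ->
  d <= g s -> 0 <= g1 s -> exists m, s <= m <= s + (2/d + 10) /\ g m = 1 + 2*tau.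
Proof.
  intros Hd Ht Hg Hgs Hg1s. pose proof Hg as [H1 [H2 [H3 H4]]].
  set (D := 2/d + 10).
  assert (HD : 10 < D) by (unfold D; assert (0 < 2/d) by (apply Rdiv_lt_0_compat; lra); lra).
  apply NNPP; intro Hno.
  assert (Hlt : forall m, s <= m <= s + D -> g m < 1 + 2*tau).
  { intros m Hm. destruct (H3 m) as [_ h]. destruct h as [h|h]; auto. exfalso; apply Hno; exists m; split; auto. }
  assert (Hsq : forall x, s <= x <= s + D -> d <= g x -> 0 < g1 x ^ 2).
  { intros x Hx Hgx. rewrite H4. specialize (Hlt x Hx).
    assert (0 < g x ^ 2 - 4 * tau^2) by nra. nra. }
  assert (Hpos : forall x, s <= x <= s + D -> 0 < g1 x).
  { apply cont_ind. lra. intros x _; apply (dl_cont _ _ _ (H2 x)).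
    - destruct Hg1s as [h|h]; auto. exfalso. specialize (Hsq s ltac:(lra) Hgs). rewrite <- h in Hsq. simpl in Hsq; lra.
    - intros x Hx Hy. assert (Hgx : d <= g x).
      { destruct (Req_dec x s) as [->|hxs]; auto.
        destruct (MVT_cor2 g g1 s x ltac:(lra) (fun c _ => H1 c)) as [z [Hz Hzr]].
        assert (0 < g1 z) by (apply Hy; lra). nra. }
      specialize (Hsq x Hx Hgx). intro h; rewrite h in Hsq; simpl in Hsq; lra. }
  assert (Hmono : forall x y, s <= x <= y -> y <= s + D -> g x <= g y).
  { intros x y Hxy Hy. destruct (Req_dec x y) as [->|hne]; [lra|].
    destruct (MVT_cor2 g g1 x y ltac:(lra) (fun c _ => H1 c)) as [z [Hz Hzr]].
    assert (0 < g1 z) by (apply Hpos; lra). nra. }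
  assert (H2d : 0 < 2/d) by (apply Rdiv_lt_0_compat; lra).
  assert (Hp : exists p, s <= p <= s + 2/d /\ 3/4 <= g p).
  { apply NNPP; intro Hn.
    assert (Hsm : forall p, s <= p <= s + 2/d -> g p < 3/4).
    { intros p Hp. apply Rnot_le_lt; intro. apply Hn; exists p; split; auto. }
    assert (Hgd : forall p, s <= p <= s + 2/d -> d/2 <= g1 p).
    { intros p Hp. assert (Hgp : d <= g p) by (apply Rle_trans with (g s); auto; apply Hmono; unfold D; try split; lra).
      assert (Hp1 := Hpos p ltac:(unfold D; split; lra)). specialize (Hsm p Hp).
      assert (Hq : d^2/4 <= g1 p ^ 2).
      { rewrite H4. assert (d^2 <= g p ^2) by nra.
        assert (4 * tau^2 <= d^2 / 2) by nra. nra. }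
      apply Rnot_lt_le; intro. nra. }
    destruct (MVT_cor2 g g1 s (s + 2/d) ltac:(lra) (fun c _ => H1 c)) as [z [Hz Hzr]].
    specialize (Hgd z ltac:(lra)). specialize (Hsm (s + 2/d) ltac:(lra)).
    replace (s + 2/d - s) with (2/d) in Hz by ring.
    assert (d/2 * (2/d) = 1) by (field; lra).
    assert (g1 z * (2/d) >= d/2 * (2/d)) by (apply Rmult_ge_compat_r; lra).
    lra. }
  destruct Hp as [p [Hp Hgp]].
  destruct (MVT_cor2 g1 (fun x => Hf tau (g x)) p (p + 10) ltac:(lra) (fun c _ => H2 c)) as [z [Hz Hzr]].
  assert (Hfz : Hf tau (g z) <= -1/4).
  { apply Hf_top. lra. split. apply Rle_trans with (g p); auto. apply Hmono; unfold D in *; lra. apply H3. }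
  assert (Hg1p : g1 p < 5/2).
  { assert (Hq : g1 p ^ 2 < 25/4).
    { rewrite H4. destruct (H3 p). assert (0 <= 1 + 2*tau - g p) by lra.
      assert (g p ^ 2 - 4 * tau ^2 <= (1 + 2 * tau)^2) by nra.
      assert (0 <= g p ^ 2 - 4 * tau ^2) by nra.
      assert ((1 + 2 * tau - g p) * (g p ^ 2 - 4 * tau ^ 2) <= (1 + 2*tau) * (1 + 2 * tau)^2).
      { apply Rmult_le_compat; lra. }
      assert ((1 + 2*tau) * (1 + 2*tau)^2 <= 1.1) by nra.
      lra. }
    apply Rnot_le_lt; intro. nra. }
  assert (Hpp : 0 < g1 (p + 10)) by (apply Hpos; unfold D in *; lra).
  replace (p + 10 - p) with 10 in Hz by ring. lra.
Qed.

Lemma near_max tau g g1 d s : 0 < d <= 1/2 -> 0 < tau <= d/160 -> good tau g g1 ->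
  d <= g s -> exists m, Rabs (m - s) <= 2/d + 10 /\ g m = 1 + 2*tau.
Proof.
  intros Hd Ht Hg Hgs. destruct (Rle_or_lt 0 (g1 s)) as [h|h].
  - destruct (climb tau g g1 d s Hd Ht Hg Hgs h) as [m [Hm Hgm]]. exists m; split; auto.
    apply Rabs_le; split; lra.
  - destruct (climb tau _ _ d (-s) Hd Ht (good_refl tau g g1 Hg)) as [m [Hm Hgm]].
    + cbv beta. rewrite Ropp_involutive. auto.
    + cbv beta. rewrite Ropp_involutive. lra.
    + exists (-m). cbv beta in Hgm. split; auto. apply Rabs_le; split; lra.
Qed.

Lemma zero_deriv_locally (p1 p2 : R -> R) y a b : a < y < b -> (forall z, a < z < b -> p1 z = 0) ->
  dl p1 y (p2 y) -> p2 y = 0.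
Proof.
  intros Hy Hz Hd.
  assert (H : dl (fun _ => 0) y (p2 y)).
  { apply (derivable_pt_lim_locally_ext p1 (fun _ => 0) y a b); auto. }
  eapply uniqueness_limite; [exact H| apply D_const].
Qed.

Lemma const_on (p p1 : R -> R) a b : a <= b -> (forall x, dl p x (p1 x)) -> (forall z, a < z < b -> p1 z = 0) -> p b = p a.
Proof.
  intros Hab Hd Hz. destruct (Req_dec a b) as [->|hne]; auto.
  destruct (MVT_cor2 p p1 a b ltac:(lra) (fun c _ => Hd c)) as [c [Hc Hcr]].
  rewrite Hz in Hc by auto. lra.
Qed.

Lemma periodic_nat (p : R -> R) T : (forall s, p (s + T) = p s) -> forall k x, p (x + INR k * T) = p x.
Proof.
  intros HT k. induction k as [|k IH]; intros x.
  - simpl. f_equal. ring.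
  - rewrite S_INR. replace (x + (INR k + 1) * T) with ((x + INR k * T) + T) by ring. rewrite HT. auto.
Qed.

Lemma ode2 (p p1 p2 fq : R -> R) :
  (forall x, dl p x (p1 x)) -> (forall x, dl p1 x (p2 x)) -> (forall x, continuity_pt p2 x) ->
  (forall x, continuity_pt (fun s => fq (p s)) x) ->
  (forall s, p1 s * (p2 s - fq (p s)) = 0) ->
  (exists T, 0 < T /\ forall s, p (s + T) = p s) -> (exists a b, p a <> p b) ->
  forall s, p2 s = fq (p s).
Proof.
  intros Hp Hp1 Hc2 Hcf Hprod [T [HT Hper]] [a [b Hab]] s0.
  set (Q := fun s => p2 s - fq (p s)).
  assert (HQc : forall x, continuity_pt Q x) by (intro x; apply continuity_pt_minus; auto).
  apply NNPP; intro HQ0. assert (HQ0' : Q s0 <> 0) by (unfold Q; lra).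
  assert (L1 : forall x, Q x <> 0 -> exists d, 0 < d /\ forall y, Rabs (y - x) < d -> p1 y = 0).
  { intros x Hx. destruct (cont_eps Q x (HQc x) (Rabs (Q x)) ltac:(apply Rabs_pos_lt; auto)) as [d [Hd Hy]].
    exists d; split; auto. intros y Hyd. specialize (Hy y Hyd).
    assert (Q y <> 0).
    { intro h. rewrite h in Hy. replace (0 - Q x) with (- Q x) in Hy by ring. rewrite Rabs_Ropp in Hy. lra. }
    specialize (Hprod y). fold (Q y) in Hprod. destruct (Rmult_integral _ _ Hprod); auto. contradiction. }
  destruct (L1 s0 HQ0') as [d [Hd Hd0]].
  assert (Hp2s0 : p2 s0 = 0).
  { apply (zero_deriv_locally p1 p2 s0 (s0 - d) (s0 + d)); auto. lra.
    intros z Hz; apply Hd0; apply Rabs_def1; lra. }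
  set (E := fun y => s0 <= y /\ forall z, s0 <= z <= y -> p1 z = 0).
  assert (Ed : E (s0 + d/2)).
  { split. lra. intros z Hz; apply Hd0; apply Rabs_def1; lra. }
  destruct (classic (bound E)) as [Eb|Enb].
  - destruct (completeness E Eb (ex_intro _ _ Ed)) as [r [Hub Hlub]].
    assert (Hr : s0 + d/2 <= r) by (apply Hub; auto).
    assert (Hbelow : forall y, s0 <= y < r -> p1 y = 0).
    { intros y Hy. destruct (classic (exists w, E w /\ y <= w)) as [[w [[_ Hw] Hyw]]|Hn].
      - apply Hw; lra.
      - exfalso. assert (r <= y); [|lra]. apply Hlub. intros w Hw.
        destruct (Rle_or_lt w y); auto. exfalso; apply Hn; exists w; split; auto; lra. }
    assert (HQin : forall y, s0 < y < r -> Q y = Q s0).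
    { intros y Hy. unfold Q. rewrite Hp2s0.
      rewrite (zero_deriv_locally p1 p2 y s0 r); auto.
      rewrite (const_on p p1 s0 y); auto. lra. intros z Hz; apply Hbelow; lra.
      intros z Hz; apply Hbelow; lra. }
    assert (HQr : Q r = Q s0).
    { apply NNPP; intro hne.
      destruct (cont_eps Q r (HQc r) (Rabs (Q r - Q s0)) ltac:(apply Rabs_pos_lt; lra)) as [e [He Hy]].
      set (y := Rmax (s0 + (r - s0)/2) (r - e/2)).
      assert (Hy1 : s0 < y < r) by (unfold y, Rmax; destruct Rle_dec; split; lra).
      assert (Hy2 : Rabs (y - r) < e) by (unfold y, Rmax; destruct Rle_dec; apply Rabs_def1; lra).
      specialize (Hy y Hy2). rewrite HQin in Hy by auto.
      rewrite <- Rabs_Ropp, Ropp_minus_distr in Hy. lra. }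
    destruct (L1 r ltac:(rewrite HQr; auto)) as [d' [Hd' Hd'0]].
    assert (E (r + d'/2)).
    { split. lra. intros z Hz. destruct (Rlt_or_le z r) as [hz|hz].
      - apply Hbelow; lra.
      - apply Hd'0; apply Rabs_def1; lra. }
    specialize (Hub _ H). lra.
  - assert (Hall : forall z, s0 <= z -> p1 z = 0).
    { intros z Hz. apply NNPP; intro hn. apply Enb. exists z. intros y [Hy1 Hy2].
      apply Rnot_lt_le; intro hlt. apply hn; apply Hy2; lra. }
    assert (Hconst : forall x, p x = p s0).
    { intros x. destruct (INR_archimed T (s0 - x) ltac:(lra)) as [k Hk].
      rewrite <- (periodic_nat p T Hper k x).
      apply (const_on p p1 s0); auto. lra. intros z Hz; apply Hall; lra. }
    apply Hab. rewrite (Hconst a), (Hconst b). reflexivity.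
Qed.

Lemma phi_good tau phi : 0 < tau -> is_phi tau phi ->
  exists Y1, good tau (fun s => phi s ^ 2 + tau ^ 2 / phi s ^ 2) Y1 /\ phi 0 ^ 2 + tau ^ 2 / phi 0 ^ 2 = 1 + 2 * tau.
Proof.
  intros Ht [D [[HD0 HDd] [Hfi [Hper [Hnc Hmin]]]]].
  set (p1 := D 1%nat). set (p2 := D 2%nat).
  assert (Hp : forall x, dl phi x (p1 x)) by (intro x; rewrite <- HD0; apply (HDd 0%nat)).
  assert (Hp1 : forall x, dl p1 x (p2 x)) by (intro x; apply (HDd 1%nat)).
  assert (Hp2c : forall x, continuity_pt p2 x) by (intro x; apply (dl_cont _ _ _ (HDd 2%nat x))).
  assert (Hpc : forall x, continuity_pt phi x) by (intro x; apply (dl_cont _ _ _ (Hp x))).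
  fold p1 in Hfi.
  assert (Hne : forall s, phi s <> 0).
  { intros s h. specialize (Hfi s). rewrite h in Hfi. assert (0 <= p1 s ^ 2) by apply pow2_ge_0.
    assert (0 < tau^2) by (apply pow_lt; auto). simpl in *. nra. }
  assert (Hprod : forall s, p1 s * (p2 s - phi s * (1 + 2 * tau - 2 * phi s ^ 2)) = 0).
  { intros s.
    assert (Hk : dl (fun x => p1 x ^ 2 + (phi x ^ 2 - tau) ^ 2 - phi x ^ 2) s
               (2 * p1 s * p2 s + 2 * (phi s ^ 2 - tau) * (2 * phi s * p1 s) - 2 * phi s * p1 s)).
    { eapply D_eq; [|apply D_minus; [apply D_plus; [apply D_pow; apply Hp1| apply D_pow; apply D_minus; [apply D_pow; apply Hp| apply D_const]]| apply D_pow; apply Hp]].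
      simpl. ring. }
    assert (Hk0 : dl (fun x => p1 x ^ 2 + (phi x ^ 2 - tau) ^ 2 - phi x ^ 2) s 0).
    { apply (derivable_pt_lim_ext (fun _ => 0)). intros z; rewrite Hfi; ring. apply D_const. }
    pose proof (uniqueness_limite _ _ _ _ Hk Hk0) as U.
    replace (p1 s * (p2 s - phi s * (1 + 2 * tau - 2 * phi s ^ 2))) with
      ((2 * p1 s * p2 s + 2 * (phi s ^ 2 - tau) * (2 * phi s * p1 s) - 2 * phi s * p1 s) / 2) by (field).
    rewrite U. field. }
  assert (Hp2 : forall s, p2 s = phi s * (1 + 2 * tau - 2 * phi s ^ 2)).
  { apply (ode2 phi p1 p2 (fun x => x * (1 + 2 * tau - 2 * x ^ 2))); auto.
    - intros x. apply continuity_pt_mult; auto. apply continuity_pt_minus. apply continuity_pt_const; intros ? ?; reflexivity.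
      apply continuity_pt_mult. apply continuity_pt_const; intros ? ?; reflexivity.
      simpl. apply continuity_pt_mult; auto. apply continuity_pt_mult; auto. apply continuity_pt_const; intros ? ?; reflexivity. }
  assert (Hm0 : p1 0 = 0).
  { assert (pr : derivable_pt phi 0) by (exists (p1 0); apply Hp).
    pose proof (deriv_minimum phi (-1) 1 0 pr ltac:(lra) ltac:(lra) (fun x _ _ => Hmin x)) as Hm.
    transitivity (derive_pt phi 0 pr); [symmetry; apply derive_pt_eq; apply Hp | exact Hm]. }
  assert (Hu : forall s, 0 < phi s ^ 2) by (intro s; assert (h := Hne s); apply pow_lt_1_compat || (rewrite <- Rsqr_pow2; apply Rlt_0_sqr; auto)).
  assert (HY : forall s, phi s ^ 2 + tau ^ 2 / phi s ^ 2 = 2 * tau + (phi s ^ 2 - tau) ^ 2 / phi s ^ 2).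
  { intros s. field; auto. }
  exists (fun s => 2 * p1 s * (phi s - tau ^ 2 / phi s ^ 3)).
  split; [repeat split|].
  - intros s. eapply D_eq; [|apply D_plus; [apply D_pow; apply Hp| apply D_div; [apply pow_nonzero; auto| apply D_const| apply D_pow; apply Hp]]].
    simpl. field. auto.
  - intros s. eapply D_eq; [|apply D_mult; [apply D_mult; [apply D_const|apply Hp1]| apply D_minus; [apply Hp| apply D_div; [apply pow_nonzero; auto| apply D_const| apply D_pow; apply Hp]]]].
    rewrite Hp2. unfold Hf. simpl. field_simplify_eq; auto.
    replace (p1 s ^ 2) with (phi s ^ 2 - (phi s ^ 2 - tau) ^ 2) by (pose proof (Hfi s) as hh; lra). ring.
  - rewrite (HY s). assert (Hu := Hu s).
    assert (0 <= (phi s ^ 2 - tau) ^ 2 / phi s ^ 2) by (apply Rmult_le_pos; [apply pow2_ge_0| left; apply Rinv_0_lt_compat; auto]).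
    lra.
  - rewrite (HY s). assert (Hu := Hu s).
    assert ((phi s ^ 2 - tau) ^ 2 / phi s ^ 2 <= 1); [|lra].
    assert (Hle : (phi s ^ 2 - tau) ^ 2 <= phi s ^ 2) by (pose proof (Hfi s); pose proof (pow2_ge_0 (p1 s)); lra).
    apply Rmult_le_reg_r with (phi s ^ 2); auto. unfold Rdiv. rewrite Rmult_assoc, Rinv_l by lra. lra.
  - intros s. simpl. field_simplify_eq; auto.
    replace (p1 s ^ 2) with (phi s ^ 2 - (phi s ^ 2 - tau) ^ 2) by (pose proof (Hfi s) as hh; lra). ring.
  - rewrite (HY 0). specialize (Hfi 0). rewrite Hm0 in Hfi. replace ((phi 0 ^ 2 - tau) ^ 2) with (phi 0 ^ 2) by (simpl in *; lra).
    field; auto.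
Qed.

Fixpoint pseq (f : nat -> nat) (c : nat -> nat -> nat) (k : nat) : nat :=
  match k with O => c O O | S k' => c (S (f (pseq f c k'))) k end.

Lemma pseq_spec (P : nat -> nat -> Prop) (f : nat -> nat) (c : nat -> nat -> nat) :
  (forall N k, P (c N k) k) -> forall k, P (pseq f c k) k.
Proof. intros H [|k]; simpl; apply H. Qed.

Lemma pseq_incr (f : nat -> nat) (c : nat -> nat -> nat) :
  (forall N, (N <= f N)%nat) -> (forall N k, (N <= c N k)%nat) ->
  forall k, (f (pseq f c k) < f (pseq f c (S k)))%nat.
Proof.
  intros Hf Hc k. simpl. specialize (Hf (c (S (f (pseq f c k))) (S k))).
  specialize (Hc (S (f (pseq f c k))) (S k)). lia.
Qed.

Lemma incr_ge (sigma : nat -> nat) : (forall k, (sigma k < sigma (S k))%nat) -> forall k, (k <= sigma k)%nat.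
Proof. intros H k; induction k; [lia|]. specialize (H k); lia. Qed.

Lemma Rabs_le_iv x B : Rabs x <= B -> -B <= x <= B.
Proof. intros H. unfold Rabs in H; destruct Rcase_abs in H; split; lra. Qed.

Lemma goodX (phi : R -> R -> R) (t : R -> R) tau : 0 < tau -> is_phi tau (phi tau) ->
  (exists X1, good tau (fun s => xi tau (t tau) (phi tau) s) X1) /\
  xi tau (t tau) (phi tau) (t tau) = 1 + 2 * tau.
Proof.
  intros Ht Hp. destruct (phi_good tau (phi tau) Ht Hp) as [Y1 [HG HY0]]. split.
  - exists (fun s => Y1 (s + - t tau)). apply (good_shift tau _ _ (- t tau) HG).
  - unfold xi. rewrite Rminus_diag. exact HY0.
Qed.

Theorem lemma4p4 :
  forall (phi : R -> R -> R) (t : R -> R),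
    (forall tau, 0 < tau -> is_phi tau (phi tau)) ->
    forall taun : nat -> R,
      (forall n, 0 < taun n) -> Un_cv taun 0 ->
      exists sigma : nat -> nat,
        (forall k, (sigma k < sigma (S k))%nat) /\
        ((exists s0 : R,
            cv_unif_compact
              (fun k s => xi (taun (sigma k)) (t (taun (sigma k))) (phi (taun (sigma k))) s)
              (fun s => / (cosh (s - s0)) ^ 2))
         \/
         cv_unif_compact
           (fun k s => xi (taun (sigma k)) (t (taun (sigma k))) (phi (taun (sigma k))) s)
           (fun _ => 0)).
Proof.
  intros phi t Hphi taun Hpos Hcv.
  set (X := fun n s => xi (taun n) (t (taun n)) (phi (taun n)) s).
  assert (HG : forall n, exists X1, good (taun n) (X n) X1)
    by (intro n; apply (goodX phi t (taun n) (Hpos n) (Hphi _ (Hpos n)))).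
  assert (Hsmall : forall e, 0 < e -> exists N, forall n, (N <= n)%nat -> taun n < e).
  { intros e He. destruct (Hcv e He) as [N HN]. exists N. intros n Hn. specialize (HN n Hn).
    unfold R_dist in HN. rewrite Rminus_0_r in HN. apply Rabs_def2 in HN. lra. }
  destruct (classic (exists B, forall N, exists n, (N <= n)%nat /\ exists m, Rabs m <= B /\ X n m = 1 + 2 * taun n))
    as [[B HB]|HnB].
  -
    assert (HB' : forall N, exists q : nat * R, (N <= fst q)%nat /\ Rabs (snd q) <= B /\ X (fst q) (snd q) = 1 + 2 * taun (fst q)).
    { intros N. destruct (HB N) as [n [Hn [m Hm]]]. exists (n, m). simpl. auto. }
    set (q := fun N => proj1_sig (constructive_indefinite_description _ (HB' N))).
    assert (Hq : forall N, (N <= fst (q N))%nat /\ Rabs (snd (q N)) <= B /\ X (fst (q N)) (snd (q N)) = 1 + 2 * taun (fst (q N)))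
      by (intro N; unfold q; apply proj2_sig).
    set (f := fun N => fst (q N)). set (w := fun N => snd (q N)).
    destruct (Bolzano_Weierstrass w (fun c => -B <= c <= B) (compact_P3 (-B) B)) as [l Hl].
    { intros n. apply Rabs_le_iv. apply (Hq n). }
    assert (Hc : forall N k, exists p, (N <= p)%nat /\ Rabs (w p - l) < / (INR k + 1)).
    { intros N k. assert (Hk : 0 < / (INR k + 1)) by (apply Rinv_0_lt_compat; pose proof (pos_INR k); lra).
      destruct (Hl (disc l (mkposreal _ Hk)) N) as [p [Hp Hv]].
      { exists (mkposreal _ Hk). intros y Hy; exact Hy. }
      exists p; split; auto. }
    set (c := fun N k => proj1_sig (constructive_indefinite_description _ (Hc N k))).
    assert (Hcs : forall N k, (N <= c N k)%nat /\ Rabs (w (c N k) - l) < / (INR k + 1))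
      by (intros N k; unfold c; apply proj2_sig).
    exists (fun k => f (pseq f c k)).
    assert (Hincr : forall k, (f (pseq f c k) < f (pseq f c (S k)))%nat).
    { apply pseq_incr. intros N; apply (Hq N). intros N k; apply (Hcs N k). }
    split; auto. left. exists l.
    intros a b eps Heps.
    set (K := exp (12 * (Rabs a + Rabs b + B))).
    assert (HK : 0 < K) by apply exp_pos.
    destruct (Hsmall (Rmin (1/2) (eps / (10 * K))) ltac:(apply Rmin_pos; [lra| apply Rdiv_lt_0_compat; lra])) as [N1 HN1].
    destruct (archimed_cor1 (eps / 4) ltac:(lra)) as [N2 [HN2 HN2p]].
    exists (Nat.max N1 N2). intros k Hk s Hs.
    set (pk := pseq f c k).
    assert (Hwk : Rabs (w pk - l) < / (INR k + 1)).
    { apply (pseq_spec (fun p k => Rabs (w p - l) < / (INR k + 1))). intros; apply Hcs. }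
    assert (Hge : (k <= f pk)%nat) by (apply (incr_ge (fun k => f (pseq f c k))); auto).
    assert (Htau := Hpos (f pk)).
    assert (Htk : taun (f pk) < Rmin (1/2) (eps / (10 * K))) by (apply HN1; lia).
    assert (Ht1 : taun (f pk) < 1/2) by (apply Rlt_le_trans with (1 := Htk); apply Rmin_l).
    assert (Ht2 : taun (f pk) < eps / (10 * K)) by (apply Rlt_le_trans with (1 := Htk); apply Rmin_r).
    destruct (HG (f pk)) as [X1 HX1].
    destruct (Hq pk) as [_ [Hwb Hwm]]. change (snd (q pk)) with (w pk) in Hwb, Hwm. change (fst (q pk)) with (f pk) in Hwm.
    pose proof (gronwall (taun (f pk)) (X (f pk)) X1 (w pk) (s - w pk) ltac:(lra) HX1 Hwm) as Gr.
    replace (w pk + (s - w pk)) with s in Gr by ring.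
    assert (Hexp : exp (12 * Rabs (s - w pk)) <= K).
    { unfold K. destruct (Req_dec (12 * Rabs (s - w pk)) (12 * (Rabs a + Rabs b + B))) as [e|e]; [rewrite e; lra|].
      left. apply exp_increasing.
      assert (Rabs (s - w pk) <= Rabs a + Rabs b + B); [|lra].
      apply Rabs_le_iv in Hwb. apply Rabs_le; pose proof (Rabs_pos a); pose proof (Rabs_pos b);
      pose proof (Rabs_le_iv a _ (Rle_refl _)); pose proof (Rabs_le_iv b _ (Rle_refl _)); split; lra. }
    assert (Hkinv : / (INR k + 1) < eps / 4).
    { apply Rle_lt_trans with (/ INR N2); auto.
      apply Rinv_le_contravar. apply lt_0_INR; lia.
      assert (INR N2 <= INR k) by (apply le_INR; lia). lra. }
    assert (Hlip := eta_lip (s - w pk) (s - l)).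
    replace (s - w pk - (s - l)) with (- (w pk - l)) in Hlip by ring. rewrite Rabs_Ropp in Hlip.
    unfold eta in Gr, Hlip. cbv beta.
    change (xi (taun (f pk)) (t (taun (f pk))) (phi (taun (f pk))) s) with (X (f pk) s).
    apply Rle_lt_trans with (Rabs (X (f pk) s - / cosh (s - w pk) ^ 2) + Rabs (/ cosh (s - w pk) ^ 2 - / cosh (s - l) ^ 2)).
    { replace (X (f pk) s - / cosh (s - l) ^ 2) with ((X (f pk) s - / cosh (s - w pk) ^ 2) + (/ cosh (s - w pk) ^ 2 - / cosh (s - l) ^ 2)) by ring.
      apply Rabs_triang. }
    assert (5 * taun (f pk) * exp (12 * Rabs (s - w pk)) <= 5 * taun (f pk) * K)
      by (apply Rmult_le_compat_l; lra).
    assert (5 * taun (f pk) * K < eps / 2).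
    { assert (HH : taun (f pk) * K < eps / (10 * K) * K) by (apply Rmult_lt_compat_r; lra).
      replace (eps / (10 * K) * K) with (eps / 10) in HH by (field; lra). lra. }
    lra.
  -
    exists (fun k => k). split; [intros; lia|]. right.
    intros a b eps Heps.
    set (d := Rmin (eps / 2) (1/2)).
    assert (Hd : 0 < d <= 1/2) by (unfold d; split; [apply Rmin_pos; lra| apply Rmin_r]).
    assert (Hde : d <= eps / 2) by apply Rmin_l.
    set (B := Rabs a + Rabs b + (2 / d + 10)).
    assert (HN1 : exists N, forall n, (N <= n)%nat -> forall m, Rabs m <= B -> X n m <> 1 + 2 * taun n).
    { apply NNPP; intro Hn. apply HnB. exists B. intros N. apply NNPP; intro Hn2. apply Hn. exists N.
      intros n Hn' m Hm Heq. apply Hn2. exists n; split; auto. exists m; split; auto. }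
    destruct HN1 as [N1 HN1].
    destruct (Hsmall (d / 160) ltac:(lra)) as [N2 HN2].
    exists (Nat.max N1 N2). intros n Hn s Hs.
    destruct (HG n) as [X1 HX1].
    assert (Hxs : X n s < d).
    { apply Rnot_le_lt; intro Hge.
      assert (Ht : 0 < taun n <= d / 160) by (split; [apply Hpos| left; apply HN2; lia]).
      destruct (near_max (taun n) (X n) X1 d s Hd Ht HX1 Hge) as [m [Hm Hmm]].
      apply (HN1 n ltac:(lia) m); auto.
      unfold B. apply Rabs_le_iv in Hm. apply Rabs_le; pose proof (Rabs_pos a); pose proof (Rabs_pos b);
      pose proof (Rabs_le_iv a _ (Rle_refl _)); pose proof (Rabs_le_iv b _ (Rle_refl _)); split; lra. }
    destruct HX1 as [_ [_ [H3 _]]]. specialize (H3 s). pose proof (Hpos n).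
    fold (X n s). rewrite Rminus_0_r. rewrite Rabs_pos_eq by lra. lra.
Qed.
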